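(* Let $G$ be a flattened grammar and $\mathrm{CPS}(G)$ its CPS transformation (with respect to an arbitrary fixed choice of CPS-triggering nonterminals), and let $H$ be the grammar whose productions are those of $G$ together with those of $\mathrm{CPS}(G)$. Then for every $\lambda\in\Sigma^*$: (1) For every symbol $X$ of $G$, if $\hat X\Rightarrow^*\lambda$ in $\mathrm{CPS}(G)$ in $n$ steps, then $X\,\tau_X\Rightarrow^*\lambda$ in $H$ in $n$ steps. (2) For every dotted production $\Pi=X\to\alpha_1\cdots\alpha_{i-1}\cdot\alpha_i\cdots\alpha_r$ of $G$, if $\tau_\Pi\Rightarrow^*\lambda$ in $\mathrm{CPS}(G)$ in $n$ steps, then $\alpha_i\cdots\alpha_r\,\tau_X\Rightarrow^*\lambda$ in $H$ in $n$ steps.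
   Context: BNF grammars and flattening. A BNF grammar over terminals $\Sigma$ is a list of rules $X\to e$, where $X$ is a nonterminal (called top-level) and $e$ is an expression: a single symbol; a concatenation $e_1\cdots e_n$ ($n\ge 0$, the case $n=0$ being $\varepsilon$); an alternation $e_1\mid\cdots\mid e_n$; an optional $e_1?$; or a repetition $e_1^*$. The procedure $\mathrm{Flatten}(X,e)$ emits context-free productions: (i) if $e=\alpha$ is a single symbol, emit $X\to\alpha$; (ii) if $e=e_1\cdots e_n$, for each $i$ let $\alpha_i=e_i$ if $e_i$ is a single symbol, and otherwise let $\alpha_i$ be a fresh nonterminal and call $\mathrm{Flatten}(\alpha_i,e_i)$; emit $X\to\alpha_1\cdots\alpha_n$; (iii) if $e=e_1\mid\cdots\mid e_n$, call $\mathrm{Flatten}(X,e_i)$ for each $i$; (iv) if $e=e_1?$, call $\mathrm{Flatten}(X,e_1\mid\varepsilon)$; (v) if $e=e_1^*$, let $\alpha$ be fresh, call $\mathrm{Flatten}(\alpha,e_1)$ and emit $X\to\alpha X$ and $X\to\varepsilon$. The flattened grammar $G$ consists of all productions emitted by $\mathrm{Flatten}(X,e)$ over all rules $X\to e$; its start symbol $S$ is a top-level nonterminal. CPS transformation. A nonterminal is CPS-eligible if it was created as a fresh symbol during flattening. Fix an arbitrary subset of the CPS-eligible nonterminals, called CPS-triggering (terminals and top-level nonterminals are never CPS-triggering). For every nonterminal $Y$ let $\hat Y$ be a new symbol; for a terminal $\sigma$ set $\hat\sigma=\sigma$. Define mutually recursive procedures. $\mathrm{CPSProd}(X\to\alpha_1\cdots\alpha_i\cdot\alpha_{i+1}\cdots\alpha_r,\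 \tau)$, where $\tau$ is a string of symbols: if $i=0$, add the production $\hat X\to\tau$ to $\mathrm{CPS}(G)$; if $i>0$ and $\alpha_i$ is not CPS-triggering, call $\mathrm{CPSProd}(X\to\alpha_1\cdots\alpha_{i-1}\cdot\alpha_i\cdots\alpha_r,\ \hat\alpha_i\tau)$; if $i>0$, $\alpha_i$ is CPS-triggering, $i=r$ and $X=\alpha_r$ (i.e. the dotted production has the form $\alpha\to\gamma\alpha\,\cdot$), call $\mathrm{CPSProd}(X\to\alpha_1\cdots\alpha_{r-1}\cdot\alpha_r,\ \hat\alpha_r)$; otherwise ($\alpha_i$ CPS-triggering, not of that form) call $\mathrm{CPSSym}(\alpha_i,\tau)$ and then $\mathrm{CPSProd}(X\to\alpha_1\cdots\alpha_{i-1}\cdot\alpha_i\cdots\alpha_r,\ \hat\alpha_i)$. $\mathrm{CPSSym}(X,\tau)$: for each production $X\to\eta$ of $G$, call $\mathrm{CPSProd}(X\to\eta\,\cdot,\ \tau)$. The grammar $\mathrm{CPS}(G)$ consists of all productions added when $\mathrm{CPSSym}(X,\varepsilon)$ is called for every non-CPS-triggering nonterminal $X$; its start symbol is $\hat S$. Tail contexts. During this transformation $\mathrm{CPSSym}(X,\cdot)$ is invoked exactly once for each nonterminal $X$, and $\mathrm{CPSProd}(\Pi,\cdot)$ exactly once for each dotted production $\Pi$ of $G$. For a nonterminal $X$, $\tau_X$ denotes the second argument of that invocation of $\mathrm{CPSSym}(X,\cdot)$; for a terminal $X$, $\tau_X=\varepsilon$. For a dotted production $\Pi$, $\tau_\Pi$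 is the second argument of the invocation $\mathrm{CPSProd}(\Pi,\cdot)$. ''$A\Rightarrow^* w$ in $n$ steps'' means there is a derivation from $A$ to $w$ using exactly $n$ production applications. *)

(* Defs.v *)
From Stdlib Require Import List.
Import ListNotations.
Set Implicit Arguments.

Section Grammar.
Variables (Sigma Nt : Type).

(** Symbols of the flattened grammar: terminals, top-level nonterminals
    (names from the BNF rules) and fresh nonterminals created by Flatten,
    indexed by a counter. *)
Inductive sym : Type :=
| T  : Sigma -> sym
| NT : Nt -> sym
| Fr : nat -> sym.

Definition is_nonterm (X : sym) : Prop :=
  match X with T _ => False | _ => True end.

Inductive bexp : Type :=
| BSym  : sym -> bexp            (* single symbol; only T/NT used, see [wf_bexp] *)
| BCat  : list bexp -> bexp      (* concatenation; BCat [] is epsilon *)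
| BAlt  : list bexp -> bexp
| BOpt  : bexp -> bexp
| BStar : bexp -> bexp.

Fixpoint wf_bexp (e : bexp) : Prop :=
  match e with
  | BSym (Fr _) => False
  | BSym _ => True
  | BCat es | BAlt es =>
      (fix go (es : list bexp) : Prop :=
         match es with [] => True | e1 :: es' => wf_bexp e1 /\ go es' end) es
  | BOpt e1 | BStar e1 => wf_bexp e1
  end.

Definition prod := (sym * list sym)%type.

Fixpoint flat (X : sym) (e : bexp) (c : nat) {struct e} : list prod * nat :=
  match e with
  | BSym a => ([(X, [a])], c)
  | BCat es =>
      let fix go (es : list bexp) (c : nat) : list prod * list sym * nat :=
        match es with
        | [] => ([], [], c)
        | e1 :: es' =>
            match e1 with
            | BSym a =>
                let '(ps, rhs, c') := go es' c in (ps, a :: rhs, c')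
            | _ =>
                let '(ps1, c1) := flat (Fr c) e1 (S c) in
                let '(ps2, rhs, c2) := go es' c1 in
                (ps1 ++ ps2, Fr c :: rhs, c2)
            end
        end in
      let '(ps, rhs, c') := go es c in (ps ++ [(X, rhs)], c')
  | BAlt es =>
      let fix go (es : list bexp) (c : nat) : list prod * nat :=
        match es with
        | [] => ([], c)
        | e1 :: es' =>
            let '(ps1, c1) := flat X e1 c in
            let '(ps2, c2) := go es' c1 in (ps1 ++ ps2, c2)
        end in
      go es c
  | BOpt e1 =>
      (* Flatten(X, e1 | epsilon) *)
      let '(ps, c') := flat X e1 c in (ps ++ [(X, [])], c')
  | BStar e1 =>
      let a := Fr c in
      let '(ps, c') := flat a e1 (S c) in
      (ps ++ [(X, [a; X]); (X, [])], c')
  end.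

Fixpoint flatten_from (rules : list (Nt * bexp)) (c : nat) : list prod :=
  match rules with
  | [] => []
  | (x, e) :: rs =>
      let '(ps, c') := flat (NT x) e c in ps ++ flatten_from rs c'
  end.

Definition flatten (rules : list (Nt * bexp)) : list prod := flatten_from rules 0.

Definition symG (G : list prod) (X : sym) : Prop :=
  exists p, In p G /\ (fst p = X \/ In X (snd p)).

Inductive hsym : Type :=
| Plain : sym -> hsym
| Hat   : sym -> hsym.

Definition hat (X : sym) : hsym :=
  match X with T a => Plain (T a) | _ => Hat X end.

Definition trigS (trig : nat -> bool) (X : sym) : Prop :=
  match X with Fr n => trig n = true | _ => False end.

(** The invocations of CPSSym / CPSProd made by the CPS transformation, as
    the least set of calls generated by the top-level calls CPSSym(X, eps)
    (X a non-triggering nonterminal of G) and the procedure bodies.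
    [cps_prod X alpha k tau] is the call CPSProd(X -> alpha_1..alpha_k . alpha_{k+1}..alpha_r, tau). *)
Inductive cps_sym (G : list prod) (trig : nat -> bool) : sym -> list hsym -> Prop :=
| cps_root X :
    symG G X -> is_nonterm X -> ~ trigS trig X -> cps_sym G trig X []
| cps_call X alpha k tau a :
    cps_prod G trig X alpha (S k) tau ->
    nth_error alpha k = Some a -> trigS trig a ->
    ~ (S k = length alpha /\ X = a) ->
    cps_sym G trig a tau
with cps_prod (G : list prod) (trig : nat -> bool) :
    sym -> list sym -> nat -> list hsym -> Prop :=
| cps_start X eta tau :
    cps_sym G trig X tau -> In (X, eta) G ->
    cps_prod G trig X eta (length eta) tau
| cps_nontrig X alpha k tau a :
    cps_prod G trig X alpha (S k) tau ->
    nth_error alpha k = Some a -> ~ trigS trig a ->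
    cps_prod G trig X alpha k (hat a :: tau)
| cps_self X alpha k tau :
    cps_prod G trig X alpha (S k) tau ->
    nth_error alpha k = Some X -> trigS trig X -> S k = length alpha ->
    cps_prod G trig X alpha k [hat X]
| cps_trig X alpha k tau a :
    cps_prod G trig X alpha (S k) tau ->
    nth_error alpha k = Some a -> trigS trig a ->
    ~ (S k = length alpha /\ X = a) ->
    cps_prod G trig X alpha k [hat a].

Definition hgrammar := hsym -> list hsym -> Prop.

(** The productions of CPS(G): X^ -> tau for each call CPSProd(X -> . eta, tau). *)
Definition cps_grammar (G : list prod) (trig : nat -> bool) : hgrammar :=
  fun A beta => exists X eta, A = hat X /\ cps_prod G trig X eta 0 beta.

Definition embG (G : list prod) : hgrammar :=
  fun A beta => exists X alpha, In (X, alpha) G /\ A = Plain X /\ beta = map Plain alpha.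

Definition Hgrammar (G : list prod) (trig : nat -> bool) : hgrammar :=
  fun A beta => embG G A beta \/ cps_grammar G trig A beta.

Definition dstep (P : hgrammar) (u v : list hsym) : Prop :=
  exists A beta l r, P A beta /\ u = l ++ A :: r /\ v = l ++ beta ++ r.

Inductive derivesN (P : hgrammar) : list hsym -> list hsym -> nat -> Prop :=
| dN_refl u : derivesN P u u 0
| dN_step u w v n : dstep P u w -> derivesN P w v n -> derivesN P u v (S n).

Definition word (lam : list Sigma) : list hsym := map (fun a => Plain (T a)) lam.

(** tau_X: second argument of the invocation of CPSSym(X, .) for a
    nonterminal X; epsilon for a terminal. *)
Definition tau_sym (G : list prod) (trig : nat -> bool) (X : sym) (tau : list hsym) : Prop :=
  match X with T _ => tau = [] | _ => cps_sym G trig X tau end.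

End Grammar.

(* Main.v *)
Require Import Defs.
From Stdlib Require Import List Lia Permutation Arith.
Import ListNotations.

Arguments Fr {Sigma Nt}.
Arguments NT {Sigma Nt}.
Arguments T {Sigma Nt}.

Section S.
Variables Sigma Nt : Type.
Notation sym := (sym Sigma Nt).
Notation bexp := (bexp Sigma Nt).
Notation prod := (prod Sigma Nt).

Fixpoint goC (es : list bexp) (c : nat) : list prod * list sym * nat :=
  match es with
  | [] => ([], [], c)
  | e1 :: es' =>
      match e1 with
      | BSym a => let '(ps, rhs, c') := goC es' c in (ps, a :: rhs, c')
      | _ =>
          let '(ps1, c1) := flat (Fr c) e1 (S c) in
          let '(ps2, rhs, c2) := goC es' c1 in
          (ps1 ++ ps2, Fr c :: rhs, c2)
      end
  end.

Lemma flat_cat X es c : flat X (BCat es) c =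
  let '(ps, rhs, c') := goC es c in (ps ++ [(X, rhs)], c').
Proof. reflexivity. Qed.

Section GA.
Variable X : sym.
Fixpoint goA (es : list bexp) (c : nat) : list prod * nat :=
  match es with
  | [] => ([], c)
  | e1 :: es' =>
      let '(ps1, c1) := flat X e1 c in
      let '(ps2, c2) := goA es' c1 in (ps1 ++ ps2, c2)
  end.
End GA.

Lemma flat_alt X es c : flat X (BAlt es) c = goA X es c.
Proof. reflexivity. Qed.

Lemma wf_cat_cons (e : bexp) es : wf_bexp (BCat (e :: es)) = (wf_bexp e /\ wf_bexp (BCat es)).
Proof. reflexivity. Qed.
Lemma wf_alt_cons (e : bexp) es : wf_bexp (BAlt (e :: es)) = (wf_bexp e /\ wf_bexp (BAlt es)).
Proof. reflexivity. Qed.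


Definition fr_of (a : sym) : list nat := match a with Fr d => [d] | _ => [] end.
Definition isY (Y a : sym) : bool :=
  match Y, a with Fr y, Fr d => Nat.eqb y d | _, _ => false end.
Fixpoint frs_ex (Y : sym) (l : list sym) : list nat :=
  match l with
  | [] => []
  | a :: l' => match l' with
               | [] => if isY Y a then [] else fr_of a
               | _ :: _ => fr_of a ++ frs_ex Y l'
               end
  end.
Definition occ (p : prod) := frs_ex (fst p) (snd p).
Definition frs (l : list sym) := flat_map fr_of l.

Lemma occ_in Y l k d : nth_error l k = Some (Fr d) -> ~ (S k = length l /\ Y = Fr d) ->
  In d (frs_ex Y l).
Proof.
  revert k; induction l as [|a l IH]; intros k Hn Hne; [destruct k; discriminate|].
  destruct k as [|k]; simpl in Hn.
  - inversion Hn; subst. destruct l as [|b l].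
    + simpl. destruct Y; simpl; auto. destruct (Nat.eqb_spec n d); subst; simpl; auto.
    + simpl. left; reflexivity.
  - destruct l as [|b l]; [destruct k; discriminate|].
    change (In d (fr_of a ++ frs_ex Y (b :: l))). apply in_or_app; right.
    apply (IH k Hn). simpl in Hne |- *. intros [H1 H2]; apply Hne; split; [lia|auto].
Qed.

Lemma frs_ex_split Y a l : frs_ex Y (a :: l) = (if (match l with [] => isY Y a | _ => false end) then [] else fr_of a) ++ frs_ex Y l.
Proof. destruct l; simpl; auto. destruct (isY Y a); simpl; auto. rewrite app_nil_r; auto. Qed.

Lemma occ_pos_uniq Y l k1 k2 d : NoDup (frs_ex Y l) ->
  nth_error l k1 = Some (Fr d) -> ~ (S k1 = length l /\ Y = Fr d) ->
  nth_error l k2 = Some (Fr d) -> ~ (S k2 = length l /\ Y = Fr d) -> k1 = k2.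
Proof.
  revert k1 k2; induction l as [|a l IH]; intros k1 k2 Hnd H1 N1 H2 N2;
    [destruct k1; discriminate|].
  rewrite frs_ex_split in Hnd.
  destruct k1 as [|k1], k2 as [|k2]; auto; simpl in H1, H2.
  - inversion H1; subst. exfalso.
    destruct l as [|b l]; [destruct k2; discriminate|]. change (NoDup ([] ++ d :: frs_ex Y (b :: l))) in Hnd.
    apply (NoDup_remove_2 [] _ d Hnd). change (In d (frs_ex Y (b :: l))). eapply occ_in; eauto.
    simpl in N2 |- *. intros [? ?]; apply N2; split; [lia|auto].
  - inversion H2; subst. exfalso.
    destruct l as [|b l]; [destruct k1; discriminate|]. change (NoDup ([] ++ d :: frs_ex Y (b :: l))) in Hnd.
    apply (NoDup_remove_2 [] _ d Hnd). change (In d (frs_ex Y (b :: l))). eapply occ_in; eauto.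
    simpl in N1 |- *. intros [? ?]; apply N1; split; [lia|auto].
  - f_equal. apply NoDup_app_remove_l in Hnd. apply (IH k1 k2 Hnd H1); simpl in *;
      [intros [? ?]; apply N1; split; [lia|auto] | auto |
       intros [? ?]; apply N2; split; [lia|auto]].
Qed.

Lemma frs_ex_frs Y l : (forall y, Y = Fr y -> ~ In y (frs l)) -> frs_ex Y l = frs l.
Proof.
  induction l as [|a l IH]; intros H; auto.
  rewrite frs_ex_split. unfold frs; simpl. fold (frs l). rewrite IH.
  - destruct l; auto. destruct Y; auto. destruct a; simpl; auto.
    destruct (Nat.eqb_spec n n0); subst; auto. exfalso; apply (H n0); simpl; auto.
  - intros y Hy Hi; apply (H y Hy). unfold frs; simpl; apply in_or_app; auto.
Qed.

Lemma NoDup_app_inv (A : Type) (l1 l2 : list A) : NoDup (l1 ++ l2) ->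
  NoDup l1 /\ NoDup l2 /\ (forall a, In a l1 -> In a l2 -> False).
Proof.
  intros H; repeat split; [eapply NoDup_app_remove_r; eauto|eapply NoDup_app_remove_l; eauto|].
  induction l1 as [|x l1 IH]; intros a Ha Hb; [destruct Ha|].
  simpl in H. inversion H; subst. destruct Ha as [->|Ha].
  - apply H2; apply in_or_app; auto.
  - apply (IH H3 a Ha Hb).
Qed.

Definition Inv (X : sym) (c c' : nat) (ps : list prod) : Prop :=
  c <= c' /\ (forall p, In p ps -> is_nonterm (fst p)) /\
  (forall p d, In p ps -> In d (occ p) ->
     c <= d < c' /\ (fst p = X \/ exists d', fst p = Fr d' /\ d' < d)) /\
  NoDup (flat_map occ ps).

Definition InvC (c c' : nat) (ps : list prod) (rhs : list sym) : Prop :=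
  c <= c' /\ (forall p, In p ps -> is_nonterm (fst p)) /\
  (forall p d, In p ps -> In d (occ p) ->
     c <= d < c' /\ exists d', fst p = Fr d' /\ d' < d) /\
  (forall d, In d (frs rhs) -> c <= d < c') /\
  NoDup (flat_map occ ps ++ frs rhs).

Definition Xok (X : sym) (c : nat) : Prop :=
  match X with T _ => False | NT _ => True | Fr x => x < c end.

Fixpoint bexp_ind' (P : bexp -> Prop) (Hs : forall a, P (BSym a))
  (Hc : forall es, Forall P es -> P (BCat es)) (Ha : forall es, Forall P es -> P (BAlt es))
  (Ho : forall e, P e -> P (BOpt e)) (Hst : forall e, P e -> P (BStar e)) (e : bexp) : P e :=
  match e with
  | BSym a => Hs a
  | BCat es => Hc es ((fix go (es : list bexp) : Forall P es :=
      match es with [] => Forall_nil _ | e1 :: es' => Forall_cons _ (bexp_ind' P Hs Hc Ha Ho Hst e1) (go es') end) es)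
  | BAlt es => Ha es ((fix go (es : list bexp) : Forall P es :=
      match es with [] => Forall_nil _ | e1 :: es' => Forall_cons _ (bexp_ind' P Hs Hc Ha Ho Hst e1) (go es') end) es)
  | BOpt e1 => Ho e1 (bexp_ind' P Hs Hc Ha Ho Hst e1)
  | BStar e1 => Hst e1 (bexp_ind' P Hs Hc Ha Ho Hst e1)
  end.

Lemma Inv_app X c c1 c2 ps1 ps2 : Inv X c c1 ps1 -> Inv X c1 c2 ps2 -> Inv X c c2 (ps1 ++ ps2).
Proof.
  intros (A1 & B1 & C1 & D1) (A2 & B2 & C2 & D2). split; [lia|split; [|split]].
  - intros p Hp; apply in_app_iff in Hp as [Hp|Hp]; auto.
  - intros p d Hp Hd; apply in_app_iff in Hp as [Hp|Hp];
      [destruct (C1 p d Hp Hd) as [? ?]|destruct (C2 p d Hp Hd) as [? ?]]; split; auto; lia.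
  - rewrite flat_map_app. apply NoDup_app; auto.
    intros a Ha Hb. apply in_flat_map in Ha as (p & Hp & Ha). apply in_flat_map in Hb as (q & Hq & Hb).
    destruct (C1 p a Hp Ha) as [? _]; destruct (C2 q a Hq Hb) as [? _]; lia.
Qed.

Lemma Xok_nt X c : Xok X c -> is_nonterm X.
Proof. destruct X; simpl; auto. Qed.
Lemma Xok_mono X c c1 : Xok X c -> c <= c1 -> Xok X c1.
Proof. destruct X; simpl; auto; lia. Qed.

Definition PF (e : bexp) : Prop := forall X c ps c', wf_bexp e -> Xok X c ->
  flat X e c = (ps, c') -> Inv X c c' ps.

Lemma goC_step c ps1 c1 ps2 rhs c2 : Inv (Fr c) (S c) c1 ps1 -> InvC c1 c2 ps2 rhs ->
  InvC c c2 (ps1 ++ ps2) (Fr c :: rhs).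
Proof.
  intros (A1 & B1 & C1 & D1) (A2 & B2 & C2 & E2 & D2).
  split; [lia|split; [|split; [|split]]].
  - intros p Hp; apply in_app_iff in Hp as [Hp|Hp]; auto.
  - intros p d Hp Hd; apply in_app_iff in Hp as [Hp|Hp].
    + destruct (C1 p d Hp Hd) as [R [Hf|Hf]]; split; try lia; auto.
      exists c; split; auto; lia.
    + destruct (C2 p d Hp Hd) as [R Hf]; split; auto; lia.
  - intros d Hd. change (In d (c :: frs rhs)) in Hd. destruct Hd as [<-|Hd]; [lia|].
    specialize (E2 d Hd); lia.
  - change (NoDup (flat_map occ (ps1 ++ ps2) ++ c :: frs rhs)).
    rewrite flat_map_app.
    apply Permutation_NoDup with (c :: flat_map occ ps1 ++ (flat_map occ ps2 ++ frs rhs)).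
    + rewrite app_assoc. apply Permutation_middle.
    + constructor.
      * intros Hc. apply in_app_iff in Hc as [Hc|Hc].
        -- apply in_flat_map in Hc as (p & Hp & Hc). destruct (C1 p c Hp Hc); lia.
        -- apply in_app_iff in Hc as [Hc|Hc].
           ++ apply in_flat_map in Hc as (p & Hp & Hc). destruct (C2 p c Hp Hc); lia.
           ++ specialize (E2 c Hc); lia.
      * apply NoDup_app; auto.
        intros a Ha Hb. apply in_flat_map in Ha as (p & Hp & Ha). destruct (C1 p a Hp Ha) as [R _].
        apply in_app_iff in Hb as [Hb|Hb].
        -- apply in_flat_map in Hb as (q & Hq & Hb). destruct (C2 q a Hq Hb); lia.
        -- specialize (E2 a Hb); lia.
Qed.

Lemma goC_inv es : Forall PF es -> wf_bexp (BCat es) ->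
  forall c ps rhs c', goC es c = (ps, rhs, c') -> InvC c c' ps rhs.
Proof.
  induction 1 as [|e es He HF IH]; intros Hwf c ps rhs c' E.
  - simpl in E; inversion E; subst.
    split; [lia|split; [|split; [|split]]]; simpl; try tauto; constructor.
  - rewrite wf_cat_cons in Hwf; destruct Hwf as [We Wes].
    destruct e as [a|l|l|e1|e1]; cycle 1.
    1-4: cbn [goC] in E; destruct (flat _ _ _) as [ps1 c1] eqn:E1;
      destruct (goC es c1) as [[ps2 rhs2] c2] eqn:E2; inversion E; subst;
      eapply goC_step; [eapply He; [ eauto | simpl; lia | eauto ] | eapply IH; eauto].
    cbn [goC] in E. destruct (goC es c) as [[ps0 rhs0] c0] eqn:E0. inversion E; subst.
    assert (Hfa : fr_of a = []) by (destruct a; simpl in We |- *; tauto).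
    destruct (IH Wes c ps rhs0 c' E0) as (A & B & C & E2 & D).
    assert (Hf : frs (a :: rhs0) = frs rhs0) by (unfold frs; simpl; rewrite Hfa; reflexivity).
    split; [|split; [|split; [|split]]]; auto; rewrite Hf; auto.
Qed.

Lemma goA_inv X es : Forall PF es -> wf_bexp (BAlt es) ->
  forall c ps c', Xok X c -> goA X es c = (ps, c') -> Inv X c c' ps.
Proof.
  induction 1 as [|e es He HF IH]; intros Hwf c ps c' Hx E.
  - simpl in E; inversion E; subst.
    split; [lia|split; [|split]]; simpl; try tauto; constructor.
  - rewrite wf_alt_cons in Hwf; destruct Hwf as [We Wes].
    cbn [goA] in E. destruct (flat X e c) as [ps1 c1] eqn:E1.
    destruct (goA X es c1) as [ps2 c2] eqn:E2. inversion E; subst.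
    assert (I1 : Inv X c c1 ps1) by (eapply He; eauto).
    apply Inv_app with c1; auto. eapply IH; eauto. eapply Xok_mono; eauto. apply I1.
Qed.

Lemma Inv_nil X c : Xok X c -> Inv X c c [(X, [])].
Proof.
  intros Hx. split; [lia|split; [|split]].
  - intros p [<-|[]]; eapply Xok_nt; eauto.
  - intros p d [<-|[]] Hd. destruct Hd.
  - constructor.
Qed.

Lemma flat_inv e : PF e.
Proof.
  induction e as [a|es H|es H|e1 IH|e1 IH] using bexp_ind'; intros X c ps c' Hwf Hx E.
  - simpl in E; inversion E; subst.
    split; [lia|split; [|split]].
    + intros p [<-|[]]; eapply Xok_nt; eauto.
    + intros p d [<-|[]] Hd. exfalso.
      destruct a; simpl in Hwf; try tauto; destruct X; simpl in Hd; tauto.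
    + simpl. destruct a; simpl in Hwf; try tauto; destruct X; simpl; constructor.
  - rewrite flat_cat in E. destruct (goC es c) as [[ps0 rhs] c0] eqn:E0. inversion E; subst.
    destruct (goC_inv es H Hwf c ps0 rhs c' E0) as (A & B & C & E2 & D).
    assert (Ho : occ (X, rhs) = frs rhs).
    { unfold occ; simpl. apply frs_ex_frs. intros y -> Hy. specialize (E2 y Hy). simpl in Hx. lia. }
    split; [lia|split; [|split]].
    + intros p Hp; apply in_app_iff in Hp as [Hp|[<-|[]]]; auto. eapply Xok_nt; eauto.
    + intros p d Hp Hd; apply in_app_iff in Hp as [Hp|[<-|[]]].
      * destruct (C p d Hp Hd); split; auto.
      * rewrite Ho in Hd. split; auto.
    + rewrite flat_map_app. cbn [flat_map]. rewrite app_nil_r, Ho. auto.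
  - rewrite flat_alt in E. eapply goA_inv; eauto.
  - cbn [flat] in E. destruct (flat X e1 c) as [ps0 c0] eqn:E0. inversion E; subst.
    assert (I1 : Inv X c c' ps0) by (eapply IH; eauto).
    apply Inv_app with c'; auto. apply Inv_nil. eapply Xok_mono; eauto. apply I1.
  - cbn [flat] in E. destruct (flat (Fr c) e1 (S c)) as [ps0 c0] eqn:E0. inversion E; subst.
    destruct (IH (Fr c) (S c) ps0 c' Hwf ltac:(simpl; lia) E0) as (A & B & C & D).
    assert (Ho : occ (X, [Fr c; X]) = [c]).
    { unfold occ; destruct X; simpl; auto. rewrite Nat.eqb_refl. reflexivity. }
    split; [lia|split; [|split]].
    + intros p Hp; apply in_app_iff in Hp as [Hp|[<-|[<-|[]]]]; auto; eapply Xok_nt; eauto.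
    + intros p d Hp Hd; apply in_app_iff in Hp as [Hp|[<-|[<-|[]]]].
      * destruct (C p d Hp Hd) as [R [Hf|Hf]]; split; try lia; right; eauto.
        exists c; split; auto; lia.
      * rewrite Ho in Hd. destruct Hd as [<-|[]]. split; auto; lia.
      * destruct Hd.
    + rewrite flat_map_app. cbn [flat_map]. rewrite Ho. simpl.
      apply NoDup_app; auto.
      * constructor; auto. constructor.
      * intros a Ha [Ea|[]]. subst. apply in_flat_map in Ha as (p & Hp & Ha). destruct (C p _ Hp Ha); lia.
Qed.

Lemma flatten_from_inv rules : (forall r, In r rules -> wf_bexp (snd r)) -> forall c,
  (forall p, In p (flatten_from rules c) -> is_nonterm (fst p)) /\
  (forall p d, In p (flatten_from rules c) -> In d (occ p) ->
     c <= d /\ ((exists x, fst p = NT x) \/ exists d', fst p = Fr d' /\ d' < d)) /\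
  NoDup (flat_map occ (flatten_from rules c)).
Proof.
  induction rules as [|[x e] rs IH]; intros Hw c.
  - simpl. split; [tauto|split; [tauto|constructor]].
  - simpl. destruct (flat (NT x) e c) as [ps c'] eqn:E.
    destruct (flat_inv e (NT x) c ps c' (Hw _ (or_introl eq_refl)) I E) as (A & B & C & D).
    destruct (IH (fun r H => Hw r (or_intror H)) c') as (B2 & C2 & D2).
    split; [|split].
    + intros p Hp; apply in_app_iff in Hp as [Hp|Hp]; auto.
    + intros p d Hp Hd; apply in_app_iff in Hp as [Hp|Hp].
      * destruct (C p d Hp Hd) as [R [Hf|Hf]]; split; try lia; eauto.
      * destruct (C2 p d Hp Hd) as [R Hf]; split; auto; lia.
    + rewrite flat_map_app. apply NoDup_app; auto.
      intros a Ha Hb. apply in_flat_map in Ha as (p & Hp & Ha). apply in_flat_map in Hb as (q & Hq & Hb).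
      destruct (C p a Hp Ha); destruct (C2 q a Hq Hb); lia.
Qed.

Definition GOK (G : list prod) : Prop :=
  (forall p, In p G -> is_nonterm (fst p)) /\
  (forall p d, In p G -> In d (occ p) -> (exists x, fst p = NT x) \/ exists d', fst p = Fr d' /\ d' < d) /\
  NoDup (flat_map occ G).

Lemma flatten_ok rules : (forall r, In r rules -> wf_bexp (snd r)) -> GOK (flatten rules).
Proof.
  intros Hw. destruct (flatten_from_inv rules Hw 0) as (A & B & C).
  split; [|split]; auto. intros p d Hp Hd; apply (B p d Hp Hd).
Qed.

Lemma uniq_fm (A B : Type) (f : A -> list B) ps p1 p2 d : NoDup (flat_map f ps) ->
  In p1 ps -> In p2 ps -> In d (f p1) -> In d (f p2) -> p1 = p2.
Proof.
  induction ps as [|q ps IH]; intros N H1 H2 D1 D2; [destruct H1|].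
  simpl in N. destruct (NoDup_app_inv _ _ _ N) as (Na & Nb & Nd).
  destruct H1 as [<-|H1], H2 as [<-|H2]; auto.
  - exfalso; apply (Nd d D1). apply in_flat_map; eauto.
  - exfalso; apply (Nd d D2). apply in_flat_map; eauto.
Qed.

Lemma NoDup_fm_in (A B : Type) (f : A -> list B) ps p : NoDup (flat_map f ps) -> In p ps -> NoDup (f p).
Proof.
  induction ps as [|q ps IH]; intros N H; [destruct H|].
  simpl in N. destruct (NoDup_app_inv _ _ _ N) as (Na & Nb & Nd).
  destruct H as [<-|H]; auto.
Qed.

Lemma G_occ_uniq G Y1 a1 k1 Y2 a2 k2 d : GOK G ->
  In (Y1, a1) G -> nth_error a1 k1 = Some (Fr d) -> ~ (S k1 = length a1 /\ Y1 = Fr d) ->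
  In (Y2, a2) G -> nth_error a2 k2 = Some (Fr d) -> ~ (S k2 = length a2 /\ Y2 = Fr d) ->
  Y1 = Y2 /\ a1 = a2 /\ k1 = k2.
Proof.
  intros (A & B & C) I1 N1 E1 I2 N2 E2.
  assert (Hp : (Y1, a1) = (Y2, a2)).
  { eapply uniq_fm; eauto; unfold occ; simpl; eapply occ_in; eauto. }
  inversion Hp; subst. split; auto; split; auto.
  eapply occ_pos_uniq; eauto. apply (NoDup_fm_in _ _ _ _ _ C I1).
Qed.

Lemma G_occ_order G Y a k d : GOK G ->
  In (Y, a) G -> nth_error a k = Some (Fr d) -> ~ (S k = length a /\ Y = Fr d) ->
  (exists x, Y = NT x) \/ exists d', Y = Fr d' /\ d' < d.
Proof.
  intros (A & B & C) I1 N1 E1. apply (B (Y, a) d I1). unfold occ; simpl; eapply occ_in; eauto.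
Qed.

Section CPS.
Variable G : list prod.
Variable trig : nat -> bool.

Lemma cps_sym_nt X t : cps_sym G trig X t -> is_nonterm X.
Proof. intros H; inversion H; subst; auto. destruct X; simpl in *; tauto. Qed.

Lemma cps_prod_in X alpha k t : cps_prod G trig X alpha k t -> In (X, alpha) G /\ k <= length alpha.
Proof. induction 1; split; try tauto; try lia; apply IHcps_prod. Qed.

Lemma nth_len (A : Type) (l : list A) a : nth_error l (length l) = Some a -> False.
Proof. rewrite (proj2 (nth_error_None l (length l))); [discriminate|lia]. Qed.

Lemma cps_prod_func X alpha k t1 : cps_prod G trig X alpha k t1 ->
  (forall u v, cps_sym G trig X u -> cps_sym G trig X v -> u = v) ->
  forall t2, cps_prod G trig X alpha k t2 -> t1 = t2.
Proof.
  induction 1 as [X eta tau Hs Hin|X alpha k tau a Hp IH Hn Ht|X alpha k tau Hp IH Hn Ht Hl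
                  |X alpha k tau a Hp IH Hn Ht Hne]; intros HF t2 H2; inversion H2; subst;
  try (exfalso; eapply nth_len; eassumption);
  try (match goal with H1: nth_error ?l ?k = Some ?a, H2: nth_error ?l ?k = Some ?b |- _ =>
          rewrite H1 in H2; inversion H2; subst end).
  all: try (exfalso; tauto).
  all: try reflexivity.
  - eapply HF; eauto.
  - f_equal. eapply IH; eauto.
Qed.

Lemma cps_sym_nontrig X t : cps_sym G trig X t -> ~ trigS trig X -> t = [].
Proof. intros H Hn; inversion H; subst; auto; tauto. Qed.

Hypothesis GOKG : GOK G.

Lemma cps_sym_fr d : forall t1 t2, cps_sym G trig (Fr d) t1 -> cps_sym G trig (Fr d) t2 -> t1 = t2.
Proof.
  induction d as [d IHd] using lt_wf_ind. intros t1 t2 H1 H2.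
  inversion H1 as [? S1 N1 T1|Y1 a1 k1 u1 ? P1 E1 T1 Ne1]; subst;
  inversion H2 as [? S2 N2 T2|Y2 a2 k2 u2 ? P2 E2 T2 Ne2]; subst; try tauto.
  destruct (cps_prod_in _ _ _ _ P1) as [I1 _]. destruct (cps_prod_in _ _ _ _ P2) as [I2 _].
  destruct (G_occ_uniq G Y1 a1 k1 Y2 a2 k2 d GOKG I1 E1 Ne1 I2 E2 Ne2) as (-> & -> & ->).
  eapply cps_prod_func; eauto.
  destruct (G_occ_order G Y2 a2 k2 d GOKG I2 E2 Ne2) as [[x ->]|[d' [-> Hd']]].
  - intros u v Hu Hv. rewrite (cps_sym_nontrig _ _ Hu), (cps_sym_nontrig _ _ Hv); simpl; tauto.
  - intros u v Hu Hv. eapply IHd; eauto.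
Qed.

Lemma cps_sym_func X u v : cps_sym G trig X u -> cps_sym G trig X v -> u = v.
Proof.
  intros Hu Hv. destruct X as [a|x|d].
  - apply cps_sym_nt in Hu; destruct Hu.
  - rewrite (cps_sym_nontrig _ _ Hu), (cps_sym_nontrig _ _ Hv); simpl; tauto.
  - eapply cps_sym_fr; eauto.
Qed.

Notation hs := (hsym Sigma Nt).

Lemma dN_trans (P : hgrammar Sigma Nt) u v w n m : derivesN P u v n -> derivesN P v w m -> derivesN P u w (n + m).
Proof. induction 1; intros; simpl; auto. econstructor; eauto. Qed.

Lemma dN_ctx (P : hgrammar Sigma Nt) u v n x y : derivesN P u v n -> derivesN P (x ++ u ++ y) (x ++ v ++ y) n.
Proof.
  induction 1 as [u|u w v n [A [beta [l [r [HP [-> ->]]]]]] Hd IH]; [constructor|].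
  econstructor; [|exact IH]. exists A, beta, (x ++ l), (r ++ y). split; auto.
  split; rewrite <- !app_assoc; simpl; try rewrite <- !app_assoc; reflexivity.
Qed.

Lemma dN_app (P : hgrammar Sigma Nt) u1 w1 n1 u2 w2 n2 : derivesN P u1 w1 n1 -> derivesN P u2 w2 n2 ->
  derivesN P (u1 ++ u2) (w1 ++ w2) (n1 + n2).
Proof.
  intros H1 H2. apply dN_trans with (w1 ++ u2).
  - pose proof (dN_ctx P _ _ _ [] u2 H1) as H; simpl in H; exact H.
  - pose proof (dN_ctx P _ _ _ w1 [] H2) as H; rewrite !app_nil_r in H; exact H.
Qed.

Lemma dN_mono (P Q : hgrammar Sigma Nt) u v n : (forall A b, P A b -> Q A b) -> derivesN P u v n -> derivesN Q u v n.
Proof.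
  intros HPQ; induction 1 as [|u w v n [A [beta [l [r [HP [-> ->]]]]]] Hd IH]; [constructor|].
  econstructor; [|exact IH]. exists A, beta, l, r; auto.
Qed.

Lemma dN_split (P : hgrammar Sigma Nt) u v w n : derivesN P (u ++ v) w n ->
  exists w1 w2 n1 n2, w = w1 ++ w2 /\ n = n1 + n2 /\ derivesN P u w1 n1 /\ derivesN P v w2 n2.
Proof.
  remember (u ++ v) as uv eqn:E. intros H; revert u v E.
  induction H as [uv|uv w0 w n [A [beta [l [r [HP [E1 ->]]]]]] Hd IH]; intros u v E.
  - subst. exists u, v, 0, 0. repeat split; constructor.
  - rewrite E in E1. symmetry in E1. apply app_eq_app in E1 as [l' [[-> Ev]|[-> Ev]]].
    + subst v. destruct (IH u (l' ++ beta ++ r)) as (w1 & w2 & n1 & n2 & -> & -> & D1 & D2).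
      { rewrite <- !app_assoc; reflexivity. }
      exists w1, w2, n1, (S n2). split; [reflexivity|split; [lia|split; [exact D1|]]].
      econstructor; [|exact D2]. exists A, beta, l', r; auto.
    + destruct l' as [|a l'].
      * simpl in Ev; subst v. rewrite app_nil_r.
        destruct (IH l (beta ++ r)) as (w1 & w2 & n1 & n2 & -> & -> & D1 & D2); auto.
        exists w1, w2, n1, (S n2). split; [reflexivity|split; [lia|split; [exact D1|]]].
        econstructor; [|exact D2]. exists A, beta, [], r; auto.
      * inversion Ev; subst.
        destruct (IH (l ++ beta ++ l') v) as (w1 & w2 & n1 & n2 & -> & -> & D1 & D2).
        { rewrite <- !app_assoc; reflexivity. }
        exists w1, w2, (S n1), n2. split; [reflexivity|split; [lia|split; [|exact D2]]].
        econstructor; [|exact D1]. exists a, beta, l, l'; split; auto; rewrite <- !app_assoc; auto.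
Qed.

Lemma skipn_nth (A : Type) (l : list A) k a : nth_error l k = Some a -> skipn k l = a :: skipn (S k) l.
Proof.
  revert k; induction l as [|b l IH]; intros [|k] H; simpl in *; try discriminate.
  - inversion H; auto.
  - apply IH; auto.
Qed.

Definition term (w : list hs) := Forall (fun s => exists a, s = Plain (T a)) w.

Definition One (n : nat) := forall X tauX w, tau_sym G trig X tauX -> term w ->
  derivesN (Hgrammar G trig) [hat X] w n -> derivesN (Hgrammar G trig) (Plain X :: tauX) w n.
Definition Two (n : nat) := forall X alpha k tauPi tauX w, cps_prod G trig X alpha k tauPi ->
  cps_sym G trig X tauX -> term w -> derivesN (Hgrammar G trig) tauPi w n ->
  derivesN (Hgrammar G trig) (map (@Plain Sigma Nt) (skipn k alpha) ++ tauX) w n.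

Lemma one_nt X tauX w n : hat X = Hat X -> cps_sym G trig X tauX -> term w -> (forall m, m < n -> Two m) ->
  derivesN (Hgrammar G trig) [Hat X] w n -> derivesN (Hgrammar G trig) (Plain X :: tauX) w n.
Proof.
  intros Hh Hs Tw HT Hd. inversion Hd as [u Eu|u w0 v m St Hd' Eu Ev Em]; subst.
  - inversion Tw as [|? ? [a Ha]]; discriminate.
  - destruct St as [A [beta [l [r [HP [E1 ->]]]]]].
    destruct l as [|b l]; simpl in E1.
    + inversion E1; subst. simpl.
      destruct HP as [[Y [al [_ [Ey _]]]]|[Y [eta [Ey Hp]]]]; [discriminate|].
      assert (Y = X) as ->.
      { destruct Y; simpl in Ey; inversion Ey; subst; auto. }
      simpl in Hd'; rewrite app_nil_r in Hd'.
      pose proof (HT m (Nat.lt_succ_diag_r m) X eta 0 beta tauX w Hp Hs Tw Hd') as H2.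
      simpl in H2. econstructor; [|exact H2].
      exists (Plain X), (map (@Plain Sigma Nt) eta), [], tauX. split; [|auto].
      left. exists X, eta. split; auto. apply (cps_prod_in _ _ _ _ Hp).
    + inversion E1 as [[Eb E2]]. destruct l; discriminate.
Qed.

Lemma one_from_two n : (forall m, m < n -> Two m) -> One n.
Proof.
  intros HT X tauX w Ht Tw Hd. destruct X as [a|x|d]; simpl in Ht.
  - subst; exact Hd.
  - eapply one_nt; eauto.
  - eapply one_nt; eauto.
Qed.

Lemma term_app w1 w2 : term (w1 ++ w2) -> term w1 /\ term w2.
Proof. unfold term; rewrite Forall_app; auto. Qed.

Lemma two_all n : Two n.
Proof.
  induction n as [n IHn] using lt_wf_ind.
  assert (HO : forall m, m <= n -> One m).
  { intros m Hm; apply one_from_two. intros; apply IHn; lia. }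
  assert (INNER : forall X alpha k tauPi, cps_prod G trig X alpha k tauPi ->
    forall tauX w n', n' <= n -> cps_sym G trig X tauX -> term w ->
    derivesN (Hgrammar G trig) tauPi w n' ->
    derivesN (Hgrammar G trig) (map (@Plain Sigma Nt) (skipn k alpha) ++ tauX) w n').
  2: { intros X alpha k tauPi tauX w Hp Hs Tw Hd; eapply INNER; eauto. }
  intros X alpha k tauPi Hp.
  induction Hp as [X eta tau Hs Hin|X alpha k tau a Hp IH Hn Ht|X alpha k tau Hp IH Hn Ht Hl
                  |X alpha k tau a Hp IH Hn Ht Hne]; intros tauX w n' Hn' HsX Tw Hd.
  - rewrite skipn_all. simpl. rewrite <- (cps_sym_func _ _ _ Hs HsX). exact Hd.
  - change (hat a :: tau) with ([hat a] ++ tau) in Hd.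
    destruct (dN_split _ _ _ _ _ Hd) as (w1 & w2 & n1 & n2 & -> & -> & D1 & D2).
    destruct (term_app _ _ Tw) as [T1 T2].
    assert (Ha : tau_sym G trig a []).
    { destruct a as [b|x|d]; simpl; auto; apply cps_root; auto; try exact I;
      (exists (pair X alpha); split; [exact (proj1 (cps_prod_in _ _ _ _ Hp))|right; eapply nth_error_In; eauto]). }
    pose proof (HO n1 ltac:(lia) a [] w1 Ha T1 D1) as E1.
    pose proof (IH tauX w2 n2 ltac:(lia) HsX T2 D2) as E2.
    rewrite (skipn_nth _ _ _ _ Hn). change (derivesN (Hgrammar G trig) ([Plain a] ++ (map (@Plain Sigma Nt) (skipn (S k) alpha) ++ tauX)) (w1 ++ w2) (n1 + n2)).
    apply dN_app; auto.
  - rewrite (skipn_nth _ _ _ _ Hn). rewrite Hl, skipn_all. simpl.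
    apply (HO n' Hn'); auto. destruct X; simpl in Ht |- *; tauto.
  - assert (Hsa : cps_sym G trig a tau) by (eapply cps_call; eauto).
    assert (Ha : tau_sym G trig a tau) by (destruct a; simpl in Ht |- *; tauto).
    pose proof (HO n' Hn' a tau w Ha Tw Hd) as E0.
    change (Plain a :: tau) with ([Plain a] ++ tau) in E0.
    destruct (dN_split _ _ _ _ _ E0) as (w1 & w2 & n1 & n2 & -> & -> & D1 & D2).
    destruct (term_app _ _ Tw) as [T1 T2].
    pose proof (IH tauX w2 n2 ltac:(lia) HsX T2 D2) as E2.
    rewrite (skipn_nth _ _ _ _ Hn). change (derivesN (Hgrammar G trig) ([Plain a] ++ (map (@Plain Sigma Nt) (skipn (S k) alpha) ++ tauX)) (w1 ++ w2) (n1 + n2)).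
    apply dN_app; auto.
Qed.

End CPS.
End S.

Lemma term_word (Sigma Nt : Type) (lam : list Sigma) : term Sigma Nt (word Nt lam).
Proof.
  unfold term, word. apply Forall_forall. intros x Hx. apply in_map_iff in Hx as [a [<- _]]. eauto.
Qed.

Theorem mainTheorem2 (Sigma Nt : Type) (rules : list (Nt * bexp Sigma Nt))
  (trig : nat -> bool) :
  (forall r, In r rules -> wf_bexp (snd r)) ->
  let G := flatten rules in
  let CPS := cps_grammar G trig in
  let H := Hgrammar G trig in
  forall lam : list Sigma,
    (forall X : sym Sigma Nt, symG G X ->
       forall tauX, tau_sym G trig X tauX ->
       forall n, derivesN CPS [hat X] (word Nt lam) n ->
                 derivesN H (Plain X :: tauX) (word Nt lam) n)
    /\
    (forall (X : sym Sigma Nt) (alpha : list (sym Sigma Nt)) (k : nat),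
       In (X, alpha) G -> k <= length alpha ->
       forall tauPi, cps_prod G trig X alpha k tauPi ->
       forall tauX, cps_sym G trig X tauX ->
       forall n, derivesN CPS tauPi (word Nt lam) n ->
                 derivesN H (map (@Plain Sigma Nt) (skipn k alpha) ++ tauX) (word Nt lam) n).
Proof.
  intros Hw G CPS H lam.
  pose proof (flatten_ok _ _ rules Hw) as GK.
  assert (Mono : forall u v n, derivesN CPS u v n -> derivesN H u v n).
  { intros u v n; apply dN_mono. intros A b Hb; right; exact Hb. }
  split.
  - intros X _ tauX Ht n Hd.
    assert (HO : One _ _ G trig n) by (apply one_from_two; intros; apply two_all; auto).
    apply HO; auto. apply term_word.
  - intros X alpha k _ _ tauPi Hp tauX Hs n Hd.
    apply (two_all _ _ G trig GK n X alpha k tauPi tauX (word Nt lam) Hp Hs); auto. apply term_word.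
Qed.
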